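(* Let $I=\{1,\dots,k+\ell\}\subseteq V$ where $C_1=\{1,\dots,k\}$ and $C_2=\{k+1,\dots,k+\ell\}$ are disjoint cliques of $G$ such that at least one vertex of $C_1$ and one vertex of $C_2$ are nonadjacent (edges between $C_1$ and $C_2$ may otherwise be arbitrary). Let $X_I$ be a symmetric matrix with $X_I\succeq 0$, $X_I\geq 0$ (entrywise), diagonal entries $x_1,\dots,x_{k+\ell}$, and $(X_I)_{i,j}=0$ for every edge $[i,j]$ of $G_I$ (in particular for distinct $i,j$ in the same clique). Then $X_I\in\mathrm{STAB}^2(G_I)$ if and only if $$\sum_{j=1}^{\ell}X_{i,k+j}\leq x_i\ (1\leq i\leq k),\qquad \sum_{i=1}^{k}X_{i,k+j}\leq x_{k+j}\ (1\leq j\leq \ell),\qquad \sum_{i=1}^{k+\ell}x_i\leq 1+\sum_{i=1}^k\sum_{j=1}^{\ell}X_{i,k+j}.$$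
   Context: Let $G$ be a simple graph with vertex set $V=\{1,\dots,n\}$ and edge set $E$; $G_I$ denotes the subgraph induced by $I\subseteq V$. For a graph $H$ with vertex set $I$, let $S(H)=\{s\in\{0,1\}^I: s_is_j=0\ \forall [i,j]\in E(H)\}$ (incidence vectors of stable sets, including the zero vector) and $\mathrm{STAB}^2(H)=\operatorname{conv}\{ss^T: s\in S(H)\}$. *)

(* Defs.v *)
From HB Require Import structures.
From mathcomp Require Import all_boot all_order all_algebra.
From mathcomp Require Import reals.
Set Implicit Arguments. Unset Strict Implicit. Unset Printing Implicit Defensive.
Import Order.TTheory GRing.Theory Num.Theory.
Local Open Scope ring_scope.

Definition simple_graph (n : nat) (e : rel 'I_n) : Prop :=
  (forall i j, e i j = e j i) /\ (forall i, ~~ e i i).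

(* Induced subgraph G_I on I = {0,...,m-1} (the first m vertices), m <= n. *)
Definition induced_first (n m : nat) (h : (m <= n)%N) (e : rel 'I_n) : rel 'I_m :=
  fun i j => e (widen_ord h i) (widen_ord h j).

Definition stable (m : nat) (e : rel 'I_m) (A : {set 'I_m}) : bool :=
  [forall i, forall j, ((i \in A) && (j \in A)) ==> ~~ e i j].

Definition incv (R : nzRingType) (m : nat) (A : {set 'I_m}) : 'cV[R]_m :=
  \col_i (i \in A)%:R.

(* STAB^2(H) = conv { s s^T : s in S(H) }: convex combinations over the
   (finitely many) stable sets. *)
Definition STAB2 (R : realType) (m : nat) (e : rel 'I_m) (X : 'M[R]_m) : Prop :=
  exists lam : {set 'I_m} -> R,
    [/\ forall A, 0 <= lam A,
        forall A, ~~ stable e A -> lam A = 0,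
        \sum_(A : {set 'I_m}) lam A = 1 &
        X = \sum_(A : {set 'I_m}) lam A *: (incv R A *m (incv R A)^T)].

Definition psd (R : realType) (m : nat) (X : 'M[R]_m) : Prop :=
  forall v : 'cV[R]_m, 0 <= (v^T *m X *m v) 0 0.

(* Main.v *)
Require Import Defs.
From HB Require Import structures.
From mathcomp Require Import all_boot all_order all_algebra.
From mathcomp Require Import reals.
Import Order.TTheory GRing.Theory Num.Theory.
Local Open Scope ring_scope.

Section Aux.
Variable R : realType.

Lemma entry_sum m (lam : {set 'I_m} -> R) p q :
  (\sum_(A : {set 'I_m}) lam A *: (incv R A *m (incv R A)^T)) p q =
  \sum_(A : {set 'I_m}) lam A * ((p \in A)%:R * (q \in A)%:R).
Proof.
rewrite summxE; apply: eq_bigr => A _.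
by rewrite !mxE big_ord1 !mxE.
Qed.

Lemma pick_set m (f : {set 'I_m} -> R) (B : {set 'I_m}) :
  \sum_(A : {set 'I_m}) (A == B)%:R * f A = f B.
Proof.
rewrite (bigD1 B) //= eqxx mul1r big1 ?addr0 // => A /negbTE ->.
by rewrite mul0r.
Qed.

Lemma sum_eq1 (T : finType) (P : pred T) (F : T -> R) p :
  P p -> \sum_(a | P a) F a * (p == a)%:R = F p.
Proof.
move=> Pp; rewrite (bigD1 p) //= eqxx mulr1 big1 ?addr0 // => a /andP[_ ne].
by rewrite eq_sym (negbTE ne) mulr0.
Qed.

Lemma sum_eq0 (T : finType) (P : pred T) (F : T -> R) p :
  ~~ P p -> \sum_(a | P a) F a * (p == a)%:R = 0.
Proof.
move=> nP; rewrite big1 // => a Pa.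
case: eqP => [e|]; last by rewrite mulr0.
by move: nP; rewrite e Pa.
Qed.

Lemma ind_le1 (T : finType) (P : pred T) (Q : T -> bool) :
  (forall a b, P a -> P b -> Q a -> Q b -> a = b) ->
  \sum_(a | P a) (Q a)%:R <= 1 :> R.
Proof.
move=> H.
case: (pickP (fun a => P a && Q a)) => [a /andP[Pa Qa] | N].
  rewrite (bigD1 a) //= Qa big1 ?addr0 // => b /andP[Pb nb].
  case Qb: (Q b) => //; by move: nb; rewrite (H b a Pb Pa Qb Qa) eqxx.
rewrite big1 ?ler01 // => b Pb; by move: (N b); rewrite Pb /= => ->.
Qed.
End Aux.
From mathcomp Require Import ring lra.

Section Main.
Variables (R : realType) (n k l : nat) (e : rel 'I_n) (hkl : (k + l <= n)%N).
Hypothesis hG : simple_graph e.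
Hypothesis hC1 : forall i j : 'I_k, i != j ->
           induced_first hkl e (lshift l i) (lshift l j).
Hypothesis hC2 : forall i j : 'I_l, i != j ->
           induced_first hkl e (rshift k i) (rshift k j).
Variable X : 'M[R]_(k + l).
Hypothesis hsym : X^T = X.
Hypothesis hnneg : forall i j, 0 <= X i j.
Hypothesis hedge : forall i j, induced_first hkl e i j -> X i j = 0.
Local Notation E := (induced_first hkl e).

Lemma stab_L A : stable E A -> \sum_(i < k) (lshift l i \in A)%:R <= 1 :> R.
Proof.
move=> hS; apply: ind_le1 => a b _ _ Ha Hb; apply/eqP/negPn/negP => ne.
move/forallP: hS => /(_ (lshift l a))/forallP/(_ (lshift l b)).
by rewrite Ha Hb hC1.
Qed.

Lemma stab_R A : stable E A -> \sum_(i < l) (rshift k i \in A)%:R <= 1 :> R.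
Proof.
move=> hS; apply: ind_le1 => a b _ _ Ha Hb; apply/eqP/negPn/negP => ne.
move/forallP: hS => /(_ (rshift k a))/forallP/(_ (rshift k b)).
by rewrite Ha Hb hC2.
Qed.

Lemma bb (b : bool) : (b%:R * b%:R : R) = b%:R.
Proof. by case: b; rewrite ?mulr1 ?mulr0. Qed.

Lemma forward : STAB2 E X ->
  [/\ forall i : 'I_k,
        \sum_(j < l) X (lshift l i) (rshift k j) <= X (lshift l i) (lshift l i),
      forall j : 'I_l,
        \sum_(i < k) X (lshift l i) (rshift k j) <= X (rshift k j) (rshift k j) &
      \sum_(i < k + l) X i i <=
        1 + \sum_(i < k) \sum_(j < l) X (lshift l i) (rshift k j)].
Proof.
move=> [lam [lam0 lamS lam1 HX]].
have Xe p q : X p q = \sum_A lam A * ((p \in A)%:R * (q \in A)%:R).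
  by rewrite HX entry_sum.
have aux A (u : R) : 0 <= u -> (stable E A -> u <= 1) -> lam A * u <= lam A.
  move=> u0 u1; case sA: (stable E A).
    by rewrite -{2}(mulr1 (lam A)) ler_wpM2l // u1.
  by rewrite lamS ?sA // mul0r.
have aux2 A (w u : R) : 0 <= w -> 0 <= u -> (stable E A -> u <= 1) ->
    lam A * w * u <= lam A * w.
  move=> w0 u0 u1; case sA: (stable E A); last by rewrite lamS ?sA // !mul0r.
  rewrite -mulrA ler_wpM2l // -{2}(mulr1 w) ler_wpM2l // u1 //.
split.
- move=> i; rewrite Xe; under eq_bigr do rewrite Xe.
  rewrite exchange_big /=; apply: ler_sum => A _.
  under eq_bigr do rewrite mulrA.
  rewrite -mulr_sumr bb; apply: aux2; first exact: ler0n.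
    by apply: sumr_ge0 => *; apply: ler0n.
  exact: stab_R.
- move=> j; rewrite Xe; under eq_bigr do rewrite Xe.
  rewrite exchange_big /=; apply: ler_sum => A _.
  under eq_bigr do rewrite mulrCA mulrC.
  rewrite -mulr_sumr bb; apply: aux2; first exact: ler0n.
    by apply: sumr_ge0 => *; apply: ler0n.
  exact: stab_L.
- under eq_bigr do rewrite Xe.
  under [X in _ <= 1 + X]eq_bigr => i _ do (under eq_bigr do rewrite Xe; rewrite exchange_big /=).
  rewrite [X in X <= _]exchange_big /= [X in _ <= _ + X]exchange_big /= -[X in _ <= X + _]lam1 -big_split /=.
  apply: ler_sum => A _.
  under eq_bigr do rewrite bb.
  rewrite -mulr_sumr big_split_ord /=.
  under [X in _ <= _ + X]eq_bigr do rewrite -mulr_sumr -mulr_sumr.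
  rewrite -mulr_sumr -{2}(mulr1 (lam A)) -mulrDr -mulr_suml.
  set u := \sum_(i < k) _; set v := \sum_(j < l) _.
  case sA: (stable E A); last by rewrite lamS ?sA // !mul0r.
  apply: ler_wpM2l; first exact: lam0.
  have u0 : 0 <= u by apply: sumr_ge0 => *; apply: ler0n.
  have v0 : 0 <= v by apply: sumr_ge0 => *; apply: ler0n.
  have u1 := @stab_L A sA; have v1 := @stab_R A sA.
  have h : 0 <= (1 - u) * (1 - v) by apply: mulr_ge0; rewrite subr_ge0.
  nra.
Qed.

Lemma Xs a b : X a b = X b a.
Proof. by rewrite -{1}hsym mxE. Qed.

Lemma half (x : R) : 2^-1 * (x + x) = x.
Proof. by field. Qed.

Definition r (a : 'I_(k + l)) := \sum_(b | b != a) X a b.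
Definition s a := X a a - r a.
Definition P := \sum_(i < k) \sum_(j < l) X (lshift l i) (rshift k j).
Definition c0 := 1 - \sum_(p < k + l) X p p + P.
Definition lam (A : {set 'I_(k + l)}) : R :=
  (A == set0)%:R * c0 + \sum_a (A == [set a])%:R * s a
  + 2^-1 * \sum_a \sum_(b | b != a) (A == [set a; b])%:R * X a b.

Lemma rL i : r (lshift l i) = \sum_j X (lshift l i) (rshift k j).
Proof.
rewrite /r big_mkcond big_split_ord /= big1 ?add0r.
  by apply: eq_bigr => j _; rewrite eq_rlshift.
move=> i' _; rewrite (inj_eq (@lshift_inj _ _)); case: ifP => // ne.
by apply: hedge; apply: hC1; rewrite eq_sym ne.
Qed.

Lemma rR j : r (rshift k j) = \sum_i X (lshift l i) (rshift k j).
Proof.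
rewrite /r big_mkcond big_split_ord /= [X in _ + X]big1 ?addr0.
  by apply: eq_bigr => i _; rewrite eq_lrshift /= Xs.
move=> j' _; rewrite (inj_eq (@rshift_inj _ _)); case: ifP => // ne.
by apply: hedge; apply: hC2; rewrite eq_sym ne.
Qed.

Lemma sum_r : \sum_a r a = P + P.
Proof.
rewrite big_split_ord /=; congr (_ + _).
  by apply: eq_bigr => i _; rewrite rL.
by rewrite /P exchange_big /=; apply: eq_bigr => j _; rewrite rR.
Qed.

Lemma lam_sum (g : {set 'I_(k + l)} -> R) :
  \sum_A lam A * g A = c0 * g set0 + \sum_a s a * g [set a]
    + 2^-1 * \sum_a \sum_(b | b != a) X a b * g [set a; b].
Proof.
rewrite /lam; under eq_bigr do rewrite !mulrDl.
rewrite !big_split /=; congr (_ + _ + _).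
- under eq_bigr do rewrite -mulrA.
  exact: (@pick_set _ _ (fun A => c0 * g A)).
- under eq_bigr do rewrite mulr_suml.
  rewrite exchange_big /=; apply: eq_bigr => a _.
  under eq_bigr do rewrite -mulrA.
  exact: (@pick_set _ _ (fun A => s a * g A)).
- under eq_bigr do rewrite -mulrA mulr_suml.
  rewrite -mulr_sumr exchange_big /=; congr (_ * _); apply: eq_bigr => a _.
  under eq_bigr do rewrite mulr_suml.
  rewrite exchange_big /=; apply: eq_bigr => b _.
  under eq_bigr do rewrite -mulrA.
  exact: (@pick_set _ _ (fun A => X a b * g A)).
Qed.

Lemma irrE (a : 'I_(k + l)) : E a a = false.
Proof. by apply/negbTE; case: hG => _; apply. Qed.

Lemma backward :
  (forall i : 'I_k,
        \sum_(j < l) X (lshift l i) (rshift k j) <= X (lshift l i) (lshift l i)) ->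
  (forall j : 'I_l,
        \sum_(i < k) X (lshift l i) (rshift k j) <= X (rshift k j) (rshift k j)) ->
  \sum_(i < k + l) X i i <=
        1 + \sum_(i < k) \sum_(j < l) X (lshift l i) (rshift k j) ->
  STAB2 E X.
Proof.
move=> h1 h2 h3.
have s0 a : 0 <= s a.
  by case: (split_ordP a) => [i ->|j ->]; rewrite /s ?rL ?rR subr_ge0.
have c00 : 0 <= c0 by move: h3; rewrite /c0 /P => h3; lra.
exists lam; split.
- move=> A; rewrite /lam; apply: addr_ge0; first apply: addr_ge0.
  + by apply: mulr_ge0 => //; apply: ler0n.
  + by apply: sumr_ge0 => a _; apply: mulr_ge0 => //; apply: ler0n.
  + apply: mulr_ge0; first by rewrite invr_ge0 ler0n.
    apply: sumr_ge0 => a _; apply: sumr_ge0 => b _.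
    by apply: mulr_ge0 => //; apply: ler0n.
- move=> A nS; rewrite /lam.
  have -> : (A == set0) = false.
    apply/negP => /eqP eA; move: nS; rewrite eA => /negP; apply.
    by apply/forallP => i; apply/forallP => j; rewrite in_set0.
  rewrite mul0r add0r big1 ?add0r; last first.
    move=> a _; case: eqP => [eA|]; last by rewrite mul0r.
    move: nS; rewrite eA => /negP; case.
    apply/forallP => i; apply/forallP => j; rewrite !in_set1.
    by case: eqP => [->|] //=; case: eqP => [->|] //=; rewrite irrE.
  rewrite big1 ?mulr0 // => a _; rewrite big1 // => b ba.
  case: eqP => [eA|]; last by rewrite mul0r.
  suff -> : X a b = 0 by rewrite mulr0.
  move: nS; rewrite eA /stable negb_forall => /existsP [i].
  rewrite negb_forall => /existsP [j]; rewrite negb_imply negbK !in_set2.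
  case/andP => /andP[/orP[]/eqP-> /orP[]/eqP->]; rewrite ?irrE //.
    by move/hedge.
  by move/hedge => H; rewrite Xs.
- under eq_bigr do rewrite -[lam _]mulr1.
  rewrite (lam_sum (fun=> 1)); under eq_bigr do rewrite mulr1.
  under [X in 2^-1 * X]eq_bigr do under eq_bigr do rewrite mulr1.
  rewrite mulr1 sumrB; rewrite -/(r _).
  have -> : \sum_a \sum_(b | b != a) X a b = \sum_a r a by [].
  rewrite sum_r half /c0; lra.
- apply/matrixP => p q; rewrite entry_sum.
  rewrite (lam_sum (fun A => (p \in A)%:R * (q \in A)%:R)).
  rewrite in_set0 mul0r mulr0 add0r.
  under eq_bigr do rewrite !in_set1.
  under [X in 2^-1 * X]eq_bigr do under eq_bigr do rewrite !in_set2.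
  case: (eqVneq p q) => [<-|npq].
    under eq_bigr do rewrite bb.
    under [X in 2^-1 * X]eq_bigr do under eq_bigr do rewrite bb.
    rewrite (@sum_eq1 _ _ xpredT) //.
    rewrite (bigD1 p) //= eqxx.
    under eq_bigr do rewrite mulr1.
    rewrite -/(r p).
    rewrite (eq_bigr (fun a => X p a)); last first.
      move=> a /negbTE na.
      under eq_bigr do rewrite eq_sym na /=.
      by rewrite sum_eq1 1?eq_sym ?na // Xs.
    by rewrite -/(r p) half /s subrK.
  rewrite big1 ?add0r; last first.
    move=> a _; case: (eqVneq p a) => [<-|_]; last by rewrite mul0r mulr0.
    by rewrite eq_sym (negbTE npq) !mulr0.
  rewrite (bigD1 p) //= eqxx /=.
  under eq_bigr do rewrite mul1r eq_sym (negbTE npq) /=.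
  rewrite sum_eq1 1?eq_sym //.
  rewrite (eq_bigr (fun a => X a p * (q == a)%:R)); last first.
    move=> a /negbTE na.
    rewrite (bigD1 p) /=; last by rewrite eq_sym na.
    rewrite (eq_sym p a) na eqxx orbT (eq_sym q p) (negbTE npq) orbF mul1r big1 ?addr0 // => b /andP[_ nb].
    by rewrite eq_sym (negbTE nb) /= mul0r mulr0.
  by rewrite sum_eq1 1?eq_sym // [X q p]Xs half.
Qed.

End Main.

Theorem lemmaC1 (R : realType) (n k l : nat) (e : rel 'I_n)
  (hG : simple_graph e) (hkl : (k + l <= n)%N)
  (hC1 : forall i j : 'I_k, i != j ->
           induced_first hkl e (lshift l i) (lshift l j))
  (hC2 : forall i j : 'I_l, i != j ->
           induced_first hkl e (rshift k i) (rshift k j))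
  (hnonadj : exists (i : 'I_k) (j : 'I_l),
           ~~ induced_first hkl e (lshift l i) (rshift k j))
  (X : 'M[R]_(k + l))
  (hsym : X^T = X) (hpsd : psd X)
  (hnneg : forall i j, 0 <= X i j)
  (hedge : forall i j, induced_first hkl e i j -> X i j = 0) :
  STAB2 (induced_first hkl e) X <->
  [/\ forall i : 'I_k,
        \sum_(j < l) X (lshift l i) (rshift k j) <= X (lshift l i) (lshift l i),
      forall j : 'I_l,
        \sum_(i < k) X (lshift l i) (rshift k j) <= X (rshift k j) (rshift k j) &
      \sum_(i < k + l) X i i <=
        1 + \sum_(i < k) \sum_(j < l) X (lshift l i) (rshift k j)].
Proof.
split; first exact: forward.
by case; apply: backward.
Qed.
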